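(* Let $L\ge2$, let $\mathcal{L}$ and $\mathcal{U}$ be label sets of size $L$, and fix a distinguished $z\in\mathcal{L}$. Let $H$ be a Pauli Hamiltonian whose terms are operators $P_{u,\ell}$ ($u\in\mathcal{U},\ell\in\mathcal{L}$) and $Q_\ell$ ($\ell\in\mathcal{L}\setminus\{z\}$) such that all $P_{u,\ell}$ mutually commute and $Q_\ell$ commutes with $P_{u,\ell'}$ if and only if $\ell'=\ell$. Let $\mathcal{G}$ be the grouping with groups $\{P_{u,\ell}:u\in\mathcal{U}\}\cup\{Q_\ell\}$ for $\ell\neq z$ and $\{P_{u,z}:u\in\mathcal{U}\}$, and let $\mathcal{G}'$ be the grouping with groups $\{P_{u,\ell}:u\in\mathcal{U},\ell\in\mathcal{L}\}$ and $\{Q_\ell\}$ for $\ell\ne z$. Then there exists an overlapped grouping $\mathcal{R}$ with $L$ groups which is a repacking of $\mathcal{G}$ and also (after a suitable reindexing of the groups of $\mathcal{G}'$) a repacking of $\mathcal{G}'$.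
   Context: A grouping of a Pauli Hamiltonian is a list of pairwise disjoint sets of mutually commuting Pauli terms covering all terms; an overlapped grouping drops disjointness. A repacking of a grouping $(G^{[1]},\dots,G^{[m]})$ is an overlapped grouping $(G'^{[1]},\dots,G'^{[m]})$ with the same number of groups and $G^{[j]}\subseteq G'^{[j]}$ for every $j$. *)

(* Defs.v *)
From HB Require Import structures.
From mathcomp Require Import all_boot.
Set Implicit Arguments. Unset Strict Implicit. Unset Printing Implicit Defensive.

(* Single-qubit Pauli operators, up to phase: I, X, Y, Z. *)
Inductive pauli1 := PI | PX | PY | PZ.

Definition pauli1_code (a : pauli1) : 'I_4 :=
  match a with PI => inord 0 | PX => inord 1 | PY => inord 2 | PZ => inord 3 end.
Definition pauli1_decode (i : 'I_4) : pauli1 :=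
  match val i with 0 => PI | 1 => PX | 2 => PY | _ => PZ end.
Lemma pauli1_codeK : cancel pauli1_code pauli1_decode.
Proof. by case; rewrite /pauli1_decode /= inordK. Qed.
HB.instance Definition _ := Finite.copy pauli1 (can_type pauli1_codeK).

(* Pauli strings on n qubits (phases/coefficients are irrelevant for
   commutation and grouping). *)
Definition pauli (n : nat) := n.-tuple pauli1.

Definition anticomm1 (a b : pauli1) : bool :=
  [&& a != PI, b != PI & a != b].

Definition pcommute n (p q : pauli n) : bool :=
  ~~ odd (count (fun ab => anticomm1 ab.1 ab.2) (zip p q)).

Definition commuting_set n (S : {set pauli n}) : Prop :=
  forall p q, p \in S -> q \in S -> pcommute p q.

Definition overlapped_grouping n (I : finType) (H : {set pauli n})
    (G : I -> {set pauli n}) : Prop :=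
  (forall i, G i \subset H) /\ (forall i, commuting_set (G i)) /\
  \bigcup_(i : I) G i = H.

Definition grouping n (I : finType) (H : {set pauli n})
    (G : I -> {set pauli n}) : Prop :=
  overlapped_grouping H G /\
  (forall i j, i != j -> [disjoint G i & G j]).

(* R is a repacking of the grouping G (same number of groups = same index
   type, groupwise inclusion G i \subset R i). *)
Definition repacking n (I : finType) (H : {set pauli n})
    (G R : I -> {set pauli n}) : Prop :=
  grouping H G /\ overlapped_grouping H R /\ (forall i, G i \subset R i).

(* Main.v *)
Require Import Defs.
From mathcomp Require Import all_boot.

Definition cv (a : pauli1) : nat := match a with PI => 0 | PX => 1 | PY => 2 | PZ => 3 end.
Lemma pne (a b : pauli1) : (a == b) = (cv a == cv b).
Proof.
have -> : (a == b) = (pauli1_code a == pauli1_code b) by [].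
by case: a; case: b; rewrite /= -val_eqE /= !inordK.
Qed.
Lemma anticomm1C a b : anticomm1 a b = anticomm1 b a.
Proof. by rewrite /anticomm1 !pne; case: a; case: b. Qed.
Lemma anticomm1xx a : anticomm1 a a = false.
Proof. by rewrite /anticomm1 eqxx !andbF. Qed.

Lemma count_zipC (s t : seq pauli1) :
  count (fun ab => anticomm1 ab.1 ab.2) (zip s t) =
  count (fun ab => anticomm1 ab.1 ab.2) (zip t s).
Proof.
elim: s t => [|a s IH] [|b t] //=.
by rewrite IH anticomm1C.
Qed.

Lemma pcommuteC n (p q : pauli n) : pcommute p q = pcommute q p.
Proof. by rewrite /pcommute count_zipC. Qed.

Lemma pcommutexx n (p : pauli n) : pcommute p p.
Proof.
rewrite /pcommute; suff -> : forall s : seq pauli1,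
  count (fun ab => anticomm1 ab.1 ab.2) (zip s s) = 0 by [].
by elim=> [|a s IH] //=; rewrite IH anticomm1xx.
Qed.

Lemma commuting_sub n (S T : {set pauli n}) :
  S \subset T -> commuting_set T -> commuting_set S.
Proof. by move=> /subsetP sST hT p q /sST hp /sST hq; apply: hT. Qed.

Theorem lemma3 (n : nat) (Lab Ulab : finType) (z : Lab)
    (P : Ulab -> Lab -> pauli n) (Q : Lab -> pauli n) :
  2 <= #|Lab| ->
  #|Ulab| = #|Lab| ->
  (* the terms P_{u,l} are pairwise distinct terms of H *)
  (forall u l u' l', P u l = P u' l' -> u = u' /\ l = l') ->
  (* all P_{u,l} mutually commute *)
  (forall u l u' l', pcommute (P u l) (P u' l')) ->
  (* for l <> z, Q_l commutes with P_{u,l'} iff l' = l *)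
  (forall l, l != z -> forall u l', pcommute (Q l) (P u l') = (l' == l)) ->
  let H : {set pauli n} :=
    [set P ul.1 ul.2 | ul : Ulab * Lab] :|: [set Q l | l in [set~ z]] in
  let G : Lab -> {set pauli n} := fun l =>
    if l == z then [set P u l | u : Ulab]
    else [set P u l | u : Ulab] :|: [set Q l] in
  let G' : Lab -> {set pauli n} := fun l =>
    if l == z then [set P ul.1 ul.2 | ul : Ulab * Lab]
    else [set Q l] in
  exists R : Lab -> {set pauli n},
    repacking H G R /\
    exists sigma : Lab -> Lab, bijective sigma /\ repacking H (fun l => G' (sigma l)) R.
Proof.
move=> hL hU hPinj hPP hQP H G G'.
have other (l' : Lab) : exists l'' : Lab, l'' != l'.
  have : 0 < #|[set~ l']| by rewrite cardsC1; case: #|Lab| hL => [|[|k]].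
  by case/card_gt0P => l''; rewrite !inE => ?; exists l''.
have [u0 _] : exists u0 : Ulab, true.
  have : 0 < #|Ulab| by rewrite hU; case: #|Lab| hL.
  by case/card_gt0P => u _; exists u.
have hPQ u l l' : l' != z -> P u l <> Q l'.
  move=> hl' E; have [l'' hl''] := other l'.
  have := hQP l' hl' u l''; rewrite -E hPP => /esym/eqP.
  by move=> E'; move: hl''; rewrite E' eqxx.
have hQQ l l' : l != z -> l' != z -> Q l = Q l' -> l = l'.
  move=> hl hl' E; have := hQP l hl u0 l; rewrite eqxx E hQP //.
  by move=> /eqP.
have hPH u l : P u l \in H.
  by rewrite inE; apply/orP; left; apply/imsetP; exists (u, l).
have hQH l : l != z -> Q l \in H.
  by move=> hl; rewrite inE; apply/orP; right; apply/imsetP; exists l; rewrite ?inE.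
have memH x : x \in H -> (exists u l, x = P u l) \/ (exists2 l, l != z & x = Q l).
  rewrite inE => /orP[/imsetP[[u l] _ ->]|/imsetP[l]]; first by left; exists u, l.
  by rewrite !inE => hl ->; right; exists l.
set R := fun l => if l == z then [set P ul.1 ul.2 | ul : Ulab * Lab] else G l.
have memR l x : x \in R l ->
   (exists u l', x = P u l') \/ (l != z /\ ((exists u, x = P u l) \/ x = Q l)).
  rewrite /R /G; case: eqP => hl.
    by case/imsetP => [[u l'] _ ->]; left; exists u, l'.
  rewrite inE => /orP[/imsetP[u _ ->]|]; first by right; split; [apply/eqP|left; exists u].
  by rewrite inE => /eqP ->; right; split; [apply/eqP|right].
have RH l : R l \subset H.
  by apply/subsetP => x /memR [[u [l' ->]]|[hl [[u ->]| ->]]] //; apply: hQH.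
have Rcomm l : commuting_set (R l).
  move=> p q; rewrite /R /G; case: eqP => hl.
    by move=> /imsetP[[u l'] _ ->] /imsetP[[u' l''] _ ->].
  have hl' : l != z by apply/eqP.
  rewrite !inE => /orP[/imsetP[u _ ->]|/eqP->] /orP[/imsetP[u' _ ->]|/eqP->];
    first [ exact: hPP | exact: pcommutexx | by rewrite pcommuteC hQP
          | by rewrite hQP ].
have memG l x : x \in G l -> (exists u, x = P u l) \/ (l != z /\ x = Q l).
  rewrite /G; case: eqP => hl; first by case/imsetP => u _ ->; left; exists u.
  rewrite inE => /orP[/imsetP[u _ ->]|]; first by left; exists u.
  by rewrite inE => /eqP ->; right; split => //; apply/eqP.
have memG' l x : x \in G' l ->
    (l == z /\ exists u l', x = P u l') \/ (l != z /\ x = Q l).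
  rewrite /G'; case: eqP => hl.
    by case/imsetP => -[u l'] _ ->; left; split; [apply/eqP|exists u, l'].
  by rewrite inE => /eqP ->; right; split => //; apply/eqP.
have GR l : G l \subset R l.
  rewrite /R; case: eqP => [->|//].
  by apply/subsetP => x /memG [[u ->]|[/eqP]] //; apply/imsetP; exists (u, z).
have G'R l : G' l \subset R l.
  rewrite /R /G'; case: eqP => // hl.
  by rewrite /G; case: eqP => // _; rewrite sub1set !inE eqxx orbT.
have GH l : G l \subset H by apply: subset_trans (GR l) (RH l).
have G'H l : G' l \subset H by apply: subset_trans (G'R l) (RH l).
have covG : \bigcup_(i : Lab) G i = H.
  apply/eqP; rewrite eqEsubset; apply/andP; split; first by apply/bigcupsP.
  apply/subsetP => x /memH [[u [l ->]]|[l hl ->]]; apply/bigcupP; exists l => //.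
    by rewrite /G; case: eqP => _; rewrite ?inE; [|apply/orP; left];
      apply/imsetP; exists u.
  by rewrite /G (negbTE hl) !inE eqxx orbT.
have covR : \bigcup_(i : Lab) R i = H.
  apply/eqP; rewrite eqEsubset; apply/andP; split; first by apply/bigcupsP.
  rewrite -covG; apply/bigcupsP => i _; apply: subset_trans (GR i) _.
  exact: (bigcup_sup i).
have covG' : \bigcup_(i : Lab) G' i = H.
  apply/eqP; rewrite eqEsubset; apply/andP; split; first by apply/bigcupsP.
  apply/subsetP => x /memH [[u [l ->]]|[l hl ->]]; apply/bigcupP.
    by exists z => //; rewrite /G' eqxx; apply/imsetP; exists (u, l).
  by exists l => //; rewrite /G' (negbTE hl) inE.
have ogR : overlapped_grouping H R by split; [|split].
exists R; split.
  split; last by split.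
  split.
    split => //; split => //.
    by move=> l; apply: commuting_sub (GR l) (Rcomm l).
  move=> i j hij; rewrite -setI_eq0; apply/negPn/negP => /set0Pn[x].
  rewrite inE => /andP[/memG hi /memG hj]; move: hj hij.
  case: hi => [[u ->]|[hi ->]] [[u' E]|[hj E]].
  - by case: (hPinj _ _ _ _ E) => _ ->; rewrite eqxx.
  - by case: (hPQ _ _ _ hj E).
  - by case: (hPQ _ _ _ hi (esym E)).
  - by rewrite (hQQ _ _ hi hj E) eqxx.
exists id; split; first by exists id.
split; last by split.
split.
  split => //; split => //.
  by move=> l; apply: commuting_sub (G'R l) (Rcomm l).
move=> i j hij; rewrite -setI_eq0; apply/negPn/negP => /set0Pn[x].
rewrite inE => /andP[/memG' hi /memG' hj]; move: hj hij.
case: hi => [[/eqP -> [u [l ->]]]|[hi ->]] [[/eqP -> [u' [l' E]]]|[hj E]].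
- by rewrite eqxx.
- by case: (hPQ _ _ _ hj E).
- by case: (hPQ _ _ _ hi (esym E)).
- by rewrite (hQQ _ _ hi hj E) eqxx.
Qed.
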